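(* Let $N\ge 2$, let $0\le p_{g_i}^{\min}\le p_{g_i}^{\max}$ for $i=1,\dots,N$, and let $C$ be a real number (the quantity $CVaR_\alpha(\sum_{i=1}^N s_i^t)$). Assume (a) $\min_{1\le i\le N} p_{g_i}^{\min}\le C\le\sum_{i=1}^N p_{g_i}^{\max}$, and (b) $\max_{1\le i\le N} p_{g_i}^{\min}<\min_{1\le i\le N}\{p_{g_i}^{\max}-p_{g_i}^{\min}\}$. Let $k\in\{1,\dots,N\}$ be the unique index with $\sum_{i=1}^{k-1}p_{g_i}^{\max}<C\le\sum_{i=1}^k p_{g_i}^{\max}$, and suppose $k\ge 2$. If $0<C-\sum_{i=1}^{k-1}p_{g_i}^{\max}<p_{g_k}^{\min}$, then $$p_{g_{k-1}}^{\min}<C-\sum_{i=1}^{k-2}p_{g_i}^{\max}-p_{g_k}^{\min}<p_{g_{k-1}}^{\max}.$$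
   Context: $p_{g_i}^{\min},p_{g_i}^{\max}$ are the minimum and maximum power output of the non-renewable generator at bus $i$; empty sums are zero. *)

(* Defs.v *)
From mathcomp Require Import all_boot all_order all_algebra.
Set Implicit Arguments. Unset Strict Implicit. Unset Printing Implicit Defensive.
Import Order.TTheory GRing.Theory Num.Theory.
Local Open Scope ring_scope.

(* Generators are indexed 1..N; data are functions nat -> R (only 1..N used). *)

Definition minN {R : realDomainType} (N : nat) (f : nat -> R) : R :=
  foldr (fun i acc => Num.min (f i) acc) (f 1%N) (iota 2 N.-1).

Definition maxN {R : realDomainType} (N : nat) (f : nat -> R) : R :=
  foldr (fun i acc => Num.max (f i) acc) (f 1%N) (iota 2 N.-1).

(* Main.v *)
Require Import Defs.
From mathcomp Require Import all_boot all_order all_algebra.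
From mathcomp Require Import lra.
Import Order.TTheory GRing.Theory Num.Theory.
Local Open Scope ring_scope.

Lemma foldr_min_le (R : realDomainType) (f : nat -> R) (s : seq nat) i :
  (i == 1)%N || (i \in s) ->
  foldr (fun i acc => Num.min (f i) acc) (f 1%N) s <= f i.
Proof.
elim: s => [|a s IH] /=; first by rewrite orbF => /eqP ->.
rewrite in_cons; case/orP; [move=> h|case/orP=> h].
- by rewrite ge_min IH ?h ?orbT.
- by rewrite ge_min (eqP h) lexx.
- by rewrite ge_min IH ?h ?orbT.
Qed.

Lemma foldr_max_ge (R : realDomainType) (f : nat -> R) (s : seq nat) i :
  (i == 1)%N || (i \in s) ->
  f i <= foldr (fun i acc => Num.max (f i) acc) (f 1%N) s.
Proof.
elim: s => [|a s IH] /=; first by rewrite orbF => /eqP ->.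
rewrite in_cons; case/orP; [move=> h|case/orP=> h].
- by rewrite le_max IH ?h ?orbT.
- by rewrite le_max (eqP h) lexx.
- by rewrite le_max IH ?h ?orbT.
Qed.

Lemma in_range N i : (1 <= i <= N)%N -> (i == 1)%N || (i \in iota 2 N.-1).
Proof.
move=> /andP[h1 h2]; rewrite mem_iota.
case: i h1 h2 => [|[|i]] //= _ h2.
by case: N h2 => // N; rewrite /= add2n ltnS.
Qed.

Theorem lemma1 (R : realFieldType) (N : nat) (pmin pmax : nat -> R) (C : R)
  (k : nat) :
  (2 <= N)%N ->
  (forall i, (1 <= i <= N)%N -> 0 <= pmin i /\ pmin i <= pmax i) ->
  minN N pmin <= C <= \sum_(1 <= i < N.+1) pmax i ->
  maxN N pmin < minN N (fun i => pmax i - pmin i) ->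
  (1 <= k <= N)%N ->
  \sum_(1 <= i < k) pmax i < C <= \sum_(1 <= i < k.+1) pmax i ->
  (2 <= k)%N ->
  0 < C - \sum_(1 <= i < k) pmax i < pmin k ->
  pmin k.-1 < C - \sum_(1 <= i < k.-1) pmax i - pmin k /\
  C - \sum_(1 <= i < k.-1) pmax i - pmin k < pmax k.-1.
Proof.
move=> _ _ _ hb /andP[_ hkN] _ hk2 /andP[hd1 hd2].
have hk1 : (1 <= k.-1 <= N)%N.
  by apply/andP; split; [case: (k) hk2 => [|[|k']]|case: (k) hk2 hkN => //= k' _ /ltnW].
have hk : (1 <= k <= N)%N by rewrite hkN andbT; case: (k) hk2.
have e1 : pmin k <= maxN N pmin by apply: foldr_max_ge; apply: in_range.
have e2 : minN N (fun i => pmax i - pmin i) <= pmax k.-1 - pmin k.-1.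
  by rewrite /minN; apply: (@foldr_min_le R (fun i => pmax i - pmin i) _ k.-1); apply: in_range.
have es : \sum_(1 <= i < k) pmax i = \sum_(1 <= i < k.-1) pmax i + pmax k.-1.
  by case: (k) hk2 => [|[|k']] // _; rewrite big_nat_recr.
rewrite es in hd1 hd2.
move: hd1 hd2 e1 e2 hb.
set S := \sum_(1 <= i < k.-1) pmax i.
set a := maxN N pmin. set b := minN N (fun i => pmax i - pmin i).
move=> hd1 hd2 e1 e2 hb.
clearbody S a b; move: (pmin k) (pmin k.-1) (pmax k.-1) hd1 hd2 e1 e2 hb.
move=> x y z; clear; move=> *; split; lra.
Qed.
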